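(* Let $I\subseteq\{1,\dots,m\}$, $A\subseteq F_I(\Gamma^m)$ a basic Presburger set, and $J,H$ subsets of $\{1,\dots,m\}$ such that $F_J(A)$ and $F_H(A)$ are non-empty. Then: (1) $F_J(A)=\pi_J(A)$. (2) If $H\subseteq J$ then $F_H(A)=F_H(F_J(A))$. (3) $F_H(A)\subseteq\overline{F_J(A)}$ if and only if $H\subseteq J$. In particular the faces of $A$ are linearly ordered by specialisation if and only if their supports are linearly ordered by inclusion. (4) $F_{H\cap J}(A)$ is non-empty.
   Context: $\mathcal{Z}$ is a $\mathbb{Z}$-group (linearly ordered abelian group with smallest positive element $1$, $|\mathcal{Z}/n\mathcal{Z}|=n$ for all $n\geq1$), $\mathcal{Q}$ its divisible hull, $\Gamma=\mathcal{Z}\cup\{+\infty\}$, $\Omega=\mathcal{Q}\cup\{+\infty\}$. Topology on $\Omega$ generated by open intervals and $]a,+\infty]$ ($a\in\mathcal{Q}$); product topology on $\Omega^m$; $\overline A$ is closure in $\Omega^m$. $\mathrm{Supp}\,a=\{i:a_i\neq+\infty\}$, $F_I(\Gamma^m)=\{a\in\Gamma^m:\mathrm{Supp}\,a=I\}$, $F_J(A)=\{a\in\overline A:\mathrm{Supp}\,a=J\}$; when non-empty it is called a face of $A$. $\pi_J:\Gamma^m\to F_J(\Gamma^m)$ replaces every coordinate of index outside $J$ by $+\infty$. Specialisation order: $B\leq A$ iff $B\subseteq\overline A$. A basic Presburger set $A\subseteq F_I(\Gamma^m)$ is the set of $x\in F_I(\Gamma^m)$ satisfying finitely many conditions $\varphi_l(x)\geq\gamma_l$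 and $\psi_l(x)\equiv\rho_l\,[n_l]$, where $\varphi_l,\psi_l:x\mapsto\sum_{i\in I}c_ix_i$ with $c_i\in\mathbb{Z}$, $\gamma_l\in\mathcal{Z}$, $0\le\rho_l<n_l$ integers, and $a\equiv b\,[n]$ means $a-b\in n\mathcal{Z}$. *)

(* Defs.v *)
From HB Require Import structures.
From mathcomp Require Import all_boot all_order all_algebra.
Set Implicit Arguments. Unset Strict Implicit. Unset Printing Implicit Defensive.
Import GRing.Theory.
Local Open Scope ring_scope.

Definition is_ordered_zmod (G : zmodType) (le : rel G) : Prop :=
  [/\ forall x, le x x,
      forall x y, le x y -> le y x -> x = y,
      forall x y z, le x y -> le y z -> le x z,
      forall x y, le x y \/ le y x &
      forall x y z, le x y -> le (x + z) (y + z)].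

Definition ltR (G : zmodType) (le : rel G) (x y : G) : Prop := le x y /\ x <> y.

Definition congr (G : zmodType) (n : nat) (a b : G) : Prop :=
  exists y : G, a - b = y *+ n.

(* (Z, le) is a Z-group whose smallest positive element is [one], and
   |Z / nZ| = n for all n >= 1 (there are n classes mod nZ, listed by f). *)
Definition is_zgroup (Z : zmodType) (le : rel Z) (one : Z) : Prop :=
  [/\ is_ordered_zmod le,
      ltR le 0 one,
      forall x, ltR le 0 x -> le one x &
      forall n : nat, (0 < n)%N ->
        exists f : 'I_n -> Z,
          (forall x, exists i, congr n x (f i)) /\
          (forall i j, congr n (f i) (f j) -> i = j)].

Definition is_divisible_hull (Z Q : zmodType) (le : rel Z) (qle : rel Q)
    (e : Z -> Q) : Prop :=
  [/\ is_ordered_zmod qle,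
      forall x y, e (x - y) = e x - e y,
      forall x y, le x y <-> qle (e x) (e y),
      forall (q : Q) (n : nat), (0 < n)%N -> exists r, r *+ n = q &
      forall q : Q, exists n : nat, (0 < n)%N /\ exists z, q *+ n = e z].

(* Gamma = option Z, Omega = option Q, with None = +oo; points of Gamma^m /
   Omega^m are functions 'I_m -> option _ ; sets are predicates. *)

Definition supp (T : eqType) (m : nat) (x : 'I_m -> option T) : {set 'I_m} :=
  [set i | x i != None].

(* basic open sets of Omega: ival a (Some b) = ]a,b[ , ival a None = ]a,+oo] *)
Definition ival (Q : zmodType) (qle : rel Q) (a : Q) (b : option Q)
    (x : option Q) : Prop :=
  match b with
  | Some b => exists q, x = Some q /\ ltR qle a q /\ ltR qle q b
  | None => match x with None => True | Some q => ltR qle a q end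
  end.

(* closure in Omega^m for the product topology (tested on the basis of
   products of basic open sets) *)
Definition closure (Q : zmodType) (qle : rel Q) (m : nat)
    (S : ('I_m -> option Q) -> Prop) (x : 'I_m -> option Q) : Prop :=
  forall (a : 'I_m -> Q) (b : 'I_m -> option Q),
    (forall i, ival qle (a i) (b i) (x i)) ->
    exists y, S y /\ forall i, ival qle (a i) (b i) (y i).

Definition face (Q : zmodType) (qle : rel Q) (m : nat) (J : {set 'I_m})
    (S : ('I_m -> option Q) -> Prop) (x : 'I_m -> option Q) : Prop :=
  closure qle S x /\ supp x = J.

Definition embpt (Z Q : Type) (e : Z -> Q) (m : nat) (x : 'I_m -> option Z) :
  'I_m -> option Q := fun i => omap e (x i).

Definition embset (Z Q : Type) (e : Z -> Q) (m : nat)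
    (A : ('I_m -> option Z) -> Prop) : ('I_m -> option Q) -> Prop :=
  fun y => exists2 x, A x & forall i, y i = embpt e x i.

Definition projJ (T : Type) (m : nat) (J : {set 'I_m}) (x : 'I_m -> option T) :
  'I_m -> option T := fun i => if i \in J then x i else None.

Definition spec (Q : zmodType) (qle : rel Q) (m : nat)
    (B A : ('I_m -> option Q) -> Prop) : Prop :=
  forall x, B x -> closure qle A x.

Definition linf (Z : zmodType) (m : nat) (I : {set 'I_m}) (c : 'I_m -> int)
    (x : 'I_m -> option Z) : Z :=
  \sum_(i in I) (odflt 0 (x i)) *~ c i.

Definition basic_presburger (Z : zmodType) (le : rel Z) (one : Z) (m : nat)
    (I : {set 'I_m}) (A : ('I_m -> option Z) -> Prop) : Prop :=
  exists (k l : nat) (c : 'I_k -> 'I_m -> int) (g : 'I_k -> Z)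
         (d : 'I_l -> 'I_m -> int) (rho n : 'I_l -> nat),
    (forall j, (rho j < n j)%N) /\
    forall x, A x <->
      [/\ supp x = I,
          (forall j, le (g j) (linf I (c j) x)) &
          (forall j, congr (n j) (linf I (d j) x) (one *+ rho j))].

(* Main.v *)
Require Import Defs.
From HB Require Import structures.
From mathcomp Require Import all_boot all_order all_algebra.
From mathcomp Require Import ring lra.
Require Import Defs.
Set Implicit Arguments. Unset Strict Implicit. Unset Printing Implicit Defensive.
Import Order.TTheory GRing.Theory Num.Theory.
Local Open Scope ring_scope.


Section OZ.
Variables (G : zmodType) (le : rel G).
Hypothesis hle : is_ordered_zmod le.

Lemma oz_refl x : le x x. Proof. have [h _ _ _ _] := hle; exact: h. Qed.
Lemma oz_anti x y : le x y -> le y x -> x = y. Proof. have [_ h _ _ _] := hle; exact: h. Qed.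
Lemma oz_trans x y z : le x y -> le y z -> le x z.
Proof. have [_ _ h _ _] := hle; exact: h. Qed.
Lemma oz_total x y : le x y \/ le y x. Proof. have [_ _ _ h _] := hle; exact: h. Qed.
Lemma oz_addr x y z : le x y -> le (x + z) (y + z). Proof. have [_ _ _ _ h] := hle; exact: h. Qed.
Lemma oz_addl x y z : le x y -> le (z + x) (z + y).
Proof. by rewrite ![z + _]addrC; apply: oz_addr. Qed.
Lemma oz_add a b c d : le a b -> le c d -> le (a + c) (b + d).
Proof. move=> h1 h2; apply: (oz_trans (oz_addr c h1)); exact: oz_addl. Qed.
Lemma oz_addrE x y z : le (x + z) (y + z) -> le x y.
Proof. by move=> /(oz_addr (- z)); rewrite !addrK. Qed.
Lemma oz_sub0 x y : le x y <-> le 0 (y - x).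
Proof.
split=> h; first by move: (oz_addr (- x) h); rewrite subrr.
by move: (oz_addr x h); rewrite add0r subrK.
Qed.
Lemma oz_opp x y : le x y -> le (- y) (- x).
Proof. move=> /oz_sub0 h; apply/oz_sub0; by rewrite opprK addrC. Qed.
Lemma oz_muln a b n : le a b -> le (a *+ n) (b *+ n).
Proof.
move=> h; elim: n => [|n IH]; first by rewrite !mulr0n oz_refl.
by rewrite !mulrS; apply: oz_add.
Qed.
Lemma oz_ge0_muln a n : le 0 a -> le 0 (a *+ n).
Proof. by move=> /(oz_muln n); rewrite mul0rn. Qed.
Lemma oz_ge0_mulz a (k : int) : le 0 a -> (0 <= k)%R -> le 0 (a *~ k).
Proof. by case: k => // n h _; apply: oz_ge0_muln. Qed.
Lemma oz_le_muln a n : le 0 a -> (0 < n)%N -> le a (a *+ n).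
Proof.
move=> h; case: n => // n _; rewrite mulrS -{1}[a]addr0; apply: oz_addl.
exact: oz_ge0_muln.
Qed.
Lemma oz_le_mulz a (k : int) : le 0 a -> (0 < k)%R -> le a (a *~ k).
Proof. by case: k => // n h hn; apply: oz_le_muln. Qed.


Lemma oz_lt_le_trans x y z : ltR le x y -> le y z -> ltR le x z.
Proof.
move=> [h1 h2] h3; split; first exact: oz_trans h3.
by move=> exz; apply: h2; apply: oz_anti => //; rewrite exz.
Qed.
Lemma oz_le_lt_trans x y z : le x y -> ltR le y z -> ltR le x z.
Proof.
move=> h1 [h2 h3]; split; first exact: oz_trans h2.
by move=> exz; apply: h3; apply: oz_anti => //; rewrite -exz.
Qed.
Lemma oz_ltNge x y : ltR le x y -> ~ le y x.
Proof. by move=> [h1 h2] h3; apply: h2; apply: oz_anti. Qed.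
Lemma oz_Nle x y : ~ le x y -> ltR le y x.
Proof.
move=> h; case: (oz_total x y) => // h'; split => // e; apply: h; rewrite e; exact: oz_refl.
Qed.

Lemma oz_lt_addr x y z : ltR le x y -> ltR le (x + z) (y + z).
Proof. move=> [h1 h2]; split; first exact: oz_addr. by move=> /addIr. Qed.
Lemma oz_lt_addl x y z : ltR le x y -> ltR le (z + x) (z + y).
Proof. by rewrite ![z + _]addrC; apply: oz_lt_addr. Qed.
Lemma oz_lt_trans x y z : ltR le x y -> ltR le y z -> ltR le x z.
Proof. move=> h1 [h2 _]; exact: oz_lt_le_trans h1 h2. Qed.
Lemma oz_lt_add a b c d : ltR le a b -> ltR le c d -> ltR le (a + c) (b + d).
Proof. move=> h1 h2; apply: oz_lt_trans (oz_lt_addr c h1) (oz_lt_addl b h2). Qed.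
Lemma oz_lt_irr x : ~ ltR le x x. Proof. by case. Qed.
Lemma oz_lt_opp x y : ltR le x y -> ltR le (- y) (- x).
Proof. move=> [h1 h2]; split; first exact: oz_opp. by move=> /oppr_inj /esym. Qed.

Lemma oz_ub (I : eqType) (f : I -> G) (s : seq I) :
  exists T, le 0 T /\ forall i, i \in s -> le (f i) T.
Proof.
elim: s => [|i s [T [h0 hT]]]; first by exists 0; split => //; exact: oz_refl.
case: (oz_total T (f i)) => h.
- exists (f i); split; first exact: oz_trans h.
  move=> j; rewrite inE => /orP [/eqP ->|/hT hj]; [exact: oz_refl| exact: oz_trans hj h].
- exists T; split => // j; rewrite inE => /orP [/eqP ->|/hT] //.
Qed.

End OZ.


Section FM.
Variables (m : nat) (Z : zmodType).

Definition frow := ({ffun 'I_m -> int} * int * Z)%type.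
Definition co (r : frow) (i : 'I_m) : int := r.1.1 i.
Definition rh (r : frow) : int := r.1.2.
Definition mc (r : frow) : Z := r.2.
Definition radd (r1 r2 : frow) : frow :=
  ([ffun i => co r1 i + co r2 i], rh r1 + rh r2, mc r1 + mc r2).
Definition rscale (c : nat) (r : frow) : frow :=
  ([ffun i => co r i *+ c], rh r *+ c, mc r *+ c).

Lemma co_radd r1 r2 i : co (radd r1 r2) i = co r1 i + co r2 i.
Proof. by rewrite /co ffunE. Qed.
Lemma co_rscale c r i : co (rscale c r) i = co r i *+ c.
Proof. by rewrite /co ffunE. Qed.
Lemma rh_radd r1 r2 : rh (radd r1 r2) = rh r1 + rh r2. Proof. by []. Qed.
Lemma rh_rscale c r : rh (rscale c r) = rh r *+ c. Proof. by []. Qed.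
Lemma mc_radd r1 r2 : mc (radd r1 r2) = mc r1 + mc r2. Proof. by []. Qed.
Lemma mc_rscale c r : mc (rscale c r) = mc r *+ c. Proof. by []. Qed.

Inductive der (s : seq frow) : frow -> Prop :=
 | dIn r : r \in s -> der s r
 | dAdd r1 r2 : der s r1 -> der s r2 -> der s (radd r1 r2)
 | dScale c r : der s r -> der s (rscale c r).

Lemma der_sub s s' r : (forall r', r' \in s' -> der s r') -> der s' r -> der s r.
Proof. move=> h; elim=> {r} [r /h //|r1 r2 _ h1 _ h2|c r _ h1]; by constructor. Qed.

Definition Sv (r : frow) (v : 'I_m -> rat) : rat := \sum_i (co r i)%:~R * v i.
Definition satr (v : 'I_m -> rat) (r : frow) := (rh r)%:~R <= Sv r v.

Lemma Sv_add r1 r2 v : Sv (radd r1 r2) v = Sv r1 v + Sv r2 v.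
Proof.
rewrite /Sv -big_split /=; apply: eq_bigr => i _.
by rewrite /co ffunE rmorphD mulrDl.
Qed.

Lemma Sv_scale c r v : Sv (rscale c r) v = Sv r v *+ c.
Proof.
rewrite /Sv -sumrMnl; apply: eq_bigr => i _.
by rewrite /co ffunE rmorphMn mulrnAl.
Qed.

Lemma Sv_upd r v x t :
  Sv r (fun i => if i == x then t else v i) = Sv r v - (co r x)%:~R * v x + (co r x)%:~R * t.
Proof.
rewrite /Sv (bigD1 x) //= [in RHS](bigD1 x) //= eqxx.
rewrite (eq_bigr (fun i => (co r i)%:~R * v i)); first ring.
by move=> i /negbTE ->.
Qed.


Lemma lowb (Us : seq rat) : exists t, forall u, u \in Us -> t <= u.
Proof.
elim: Us => [|u Us [t ht]]; first by exists 0.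
exists (Num.min u t) => w; rewrite inE => /orP [/eqP ->|/ht h].
- by rewrite ge_min lexx.
- by rewrite ge_min h orbT.
Qed.

Lemma between (Ls Us : seq rat) : (forall l u, l \in Ls -> u \in Us -> l <= u) ->
  exists t, (forall l, l \in Ls -> l <= t) /\ (forall u, u \in Us -> t <= u).
Proof.
elim: Ls => [|l Ls IH] h.
  by have [t ht] := lowb Us; exists t; split.
have [|t [h1 h2]] := IH; first by move=> l' u hl hu; apply: h => //; rewrite inE hl orbT.
exists (Num.max l t); split.
- move=> w; rewrite inE => /orP [/eqP ->|/h1 hw]; first by rewrite le_max lexx.
  by rewrite le_max hw orbT.
- move=> u hu; rewrite ge_max h2 // andbT; apply: h => //; exact: mem_head.
Qed.

Lemma mulrn_pos (y : rat) (z : int) : 0 < z -> y *+ `|z|%N = y * z%:~R.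
Proof. by case: z => // n _; rewrite -mulr_natr. Qed.
Lemma mulrn_neg (y : rat) (z : int) : z < 0 -> y *+ `|z|%N = y * (- z%:~R).
Proof. by case: z => // n _; rewrite -mulr_natr NegzE mulrNz opprK. Qed.

Definition comb (x : 'I_m) (p q : frow) : frow :=
  radd (rscale `|co q x|%N p) (rscale `|co p x|%N q).

Lemma fm_gen n : forall s : seq frow,
  (forall r (i : 'I_m), r \in s -> (n <= i)%N -> co r i = 0) ->
  (exists v, forall r, r \in s -> satr v r) \/
  (exists r, der s r /\ (forall i, co r i = 0) /\ 0 < rh r).
Proof.
elim: n => [|n IH] s hs.
  case: (boolP (all (fun r => rh r <= 0) s)) => [/allP hall|/allPn [r rs hr]].
  - left; exists (fun _ => 0) => r rs; rewrite /satr /Sv big1 ?lerz0 ?hall //.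
    by move=> i _; rewrite mulr0.
  - right; exists r; split; first exact: dIn.
    by split; [move=> i; apply: hs | rewrite ltNge].
case: (ltnP n m) => hnm; last first.
  apply: IH => r i rs hi; apply: hs => //; exfalso.
  by move: (ltn_ord i); rewrite ltnNge (leq_trans hnm hi).
pose x := Ordinal hnm.
pose P := filter (fun r => 0 < co r x) s.
pose N := filter (fun r => co r x < 0) s.
pose s' := filter (fun r => co r x == 0) s ++ [seq comb x p q | p <- P, q <- N].
have hs' : forall r (i : 'I_m), r \in s' -> (n <= i)%N -> co r i = 0.
  move=> r i + hi; rewrite mem_cat => /orP [|/allpairsP [[p q] /= [hp hq ->]]].
  - rewrite mem_filter => /andP [/eqP h0 rs].
    have [hi'|hi'] := ltnP n i; first exact: hs.
    have -> : i = x by apply: val_inj; apply/eqP; rewrite /= eqn_leq hi' hi.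
    by [].
  - move: hp hq; rewrite !mem_filter => /andP [hp ps] /andP [hq qs].
    rewrite /comb co_radd !co_rscale.
    have [hi'|hi'] := ltnP n i.
      by rewrite (hs p i) // (hs q i) // !mul0rn addr0.
    have -> : i = x by apply: val_inj; apply/eqP; rewrite /= eqn_leq hi' hi.
    case: (co p x) hp => // a _; case: (co q x) hq => // b _.
    rewrite /= NegzE mulNrn; apply/eqP; rewrite subr_eq0; apply/eqP.
    by rewrite -[a%:Z]natz -[b.+1%:Z]natz -!mulrnA mulnC.
have [[v hv]|[r [hr1 hr2]]] := IH s' hs'; last first.
  right; exists r; split => //; apply: der_sub hr1 => r'.
  rewrite mem_cat => /orP [|/allpairsP [[p q] /= [hp hq ->]]].
  - by rewrite mem_filter => /andP [_ ?]; apply: dIn.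
  - move: hp hq; rewrite !mem_filter => /andP [_ ps] /andP [_ qs].
    by apply: dAdd; apply: dScale; apply: dIn.
left.
pose L (p : frow) := ((rh p)%:~R - (Sv p v - (co p x)%:~R * v x)) / (co p x)%:~R.
pose U (q : frow) := ((Sv q v - (co q x)%:~R * v x) - (rh q)%:~R) / (- (co q x)%:~R).
have [|t [ht1 ht2]] := @between (map L P) (map U N).
  move=> l u /mapP [p hp ->] /mapP [q hq ->].
  move: (hp) (hq); rewrite !mem_filter => /andP [hpx ps] /andP [hqx qs].
  have: satr v (comb x p q) by apply: hv; rewrite mem_cat allpairs_f ?orbT.
  rewrite /satr /comb Sv_add !Sv_scale /rh /= -/(rh p) -/(rh q) rmorphD !rmorphMn /=.
  rewrite (mulrn_pos _ hpx) (mulrn_pos _ hpx) (mulrn_neg _ hqx) (mulrn_neg _ hqx).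
  have ha : 0 < (co p x)%:~R :> rat by rewrite ltr0z.
  have hb : 0 < - (co q x)%:~R :> rat by rewrite oppr_gt0 ltrz0.
  move=> key.
  rewrite /L /U ler_pdivrMr // mulrAC ler_pdivlMr //.
  rewrite -subr_ge0; rewrite -subr_ge0 in key.
  set A := (co p x)%:~R in key ha *; set C := (co q x)%:~R in key hb *.
  set Sp := Sv p v in key *; set Sq := Sv q v in key *.
  set rp := (rh p)%:~R in key *; set rq := (rh q)%:~R in key *.
  have -> : (Sq - C * v x - rq) * A - (rp - (Sp - A * v x)) * - C =
            Sp * - C + Sq * A - (rp * - C + rq * A) by ring.
  exact: key.
exists (fun i => if i == x then t else v i) => r rs.
rewrite /satr Sv_upd.
case: (ltrgtP (co r x) 0) => hc.
- have hU : t <= U r by apply: ht2; apply: map_f; rewrite mem_filter hc.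
  have hb : 0 < - (co r x)%:~R :> rat by rewrite oppr_gt0 ltrz0.
  move: hU; rewrite /U ler_pdivlMr //.
  set C := (co r x)%:~R; set S := Sv r v; set rr := (rh r)%:~R => h.
  have -> : S - C * v x + C * t = (S - C * v x - t * - C) by ring.
  by rewrite lerBrDr addrC -lerBrDr.
- have hL : L r <= t by apply: ht1; apply: map_f; rewrite mem_filter hc.
  have ha : 0 < (co r x)%:~R :> rat by rewrite ltr0z.
  move: hL; rewrite /L ler_pdivrMr //.
  set C := (co r x)%:~R; set S := Sv r v; set rr := (rh r)%:~R => h.
  have -> : S - C * v x + C * t = (S - C * v x) + t * C by ring.
  by rewrite -lerBlDl.
- rewrite hc mulr0z !mul0r subr0 addr0; apply: hv; rewrite mem_cat mem_filter hc eqxx rs //.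
Qed.

Lemma fm (s : seq frow) :
  (exists v, forall r, r \in s -> satr v r) \/
  (exists r, der s r /\ (forall i, co r i = 0) /\ 0 < rh r).
Proof. by apply: (@fm_gen m) => r i _ hi; move: (ltn_ord i); rewrite ltnNge hi. Qed.

End FM.


Lemma mulrz_Mn (Z : zmodType) (x : Z) (n : int) (c : nat) : x *~ (n *+ c) = (x *~ n) *+ c.
Proof. by rewrite -[n *+ c]mulr_natr mulrzA mulrz_nat. Qed.

Section MSAT.
Variables (m : nat) (Z : zmodType) (le : rel Z).
Hypothesis hle : is_ordered_zmod le.

Definition msat (B : Z) (p : 'I_m -> Z) (r : frow m Z) :=
  le (mc r + B *~ rh r) (\sum_i p i *~ co r i).

Lemma msat_der B p s r : (forall r', r' \in s -> msat B p r') -> der s r -> msat B p r.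
Proof.
move=> h; elim=> {r} [r /h //|r1 r2 _ h1 _ h2|c r _ h1].
- rewrite /msat mc_radd rh_radd mulrzDr addrACA.
  rewrite (eq_bigr (fun i => p i *~ co r1 i + p i *~ co r2 i)); last first.
    by move=> i _; rewrite co_radd mulrzDr.
  rewrite big_split /=; exact: oz_add.
- rewrite /msat mc_rscale rh_rscale mulrz_Mn -mulrnDl.
  rewrite (eq_bigr (fun i => (p i *~ co r i) *+ c)); last first.
    by move=> i _; rewrite co_rscale mulrz_Mn.
  rewrite sumrMnl; exact: oz_muln.
Qed.

End MSAT.

Lemma sumZ_delta (Z : zmodType) m (f : 'I_m -> Z) i :
  \sum_j f j *~ (if j == i then 1 else 0) = f i.
Proof.
rewrite (bigD1 i) //= eqxx big1 ?addr0 // => j /negbTE ->; exact: mulr0z.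
Qed.

Lemma sumQ_delta m (v : 'I_m -> rat) i :
  \sum_j (if j == i then 1 else 0 : int)%:~R * v j = v i.
Proof.
rewrite (bigD1 i) //= eqxx mul1r big1 ?addr0 // => j /negbTE ->; by rewrite mul0r.
Qed.


Section Conc.
Variables (Z : zmodType) (le : rel Z) (one : Z).
Hypothesis hle : is_ordered_zmod le.
Hypothesis hone : ltR le 0 one.
Variables (m : nat) (I : {set 'I_m}) (A : ('I_m -> option Z) -> Prop).
Variables (k l : nat) (c : 'I_k -> 'I_m -> int) (g : 'I_k -> Z)
  (d : 'I_l -> 'I_m -> int) (rho nn : 'I_l -> nat).
Hypothesis hrho : forall j, (rho j < nn j)%N.
Hypothesis hA : forall x, A x <->
      [/\ supp x = I,
          (forall j, le (g j) (linf I (c j) x)) &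
          (forall j, congr (nn j) (linf I (d j) x) (one *+ rho j))].

Definition zrow : frow m Z := ([ffun _ => 0], 0, 0).
Definition dl (i : 'I_m) : {ffun 'I_m -> int} := [ffun i' => if i' == i then 1 else 0].
Definition ndl (i : 'I_m) : {ffun 'I_m -> int} := [ffun i' => - (if i' == i then 1 else 0)].

Section Sys.
Variables (J : {set 'I_m}) (cc : 'I_m -> Z).
Definition lrow (j : 'I_k) : frow m Z := ([ffun i => if i \in I then c j i else 0], 0, g j).
Definition krow (i : 'I_m) : frow m Z := if (i \in I) && (i \notin J) then (dl i, 1, 0) else zrow.
Definition jrow (i : 'I_m) : frow m Z := if i \in J then (dl i, 0, cc i) else zrow.
Definition njrow (i : 'I_m) : frow m Z := if i \in J then (ndl i, 0, - cc i) else zrow.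
Definition sys := [seq lrow j | j <- enum 'I_k] ++ ([seq krow i | i <- enum 'I_m] ++
   ([seq jrow i | i <- enum 'I_m] ++ [seq njrow i | i <- enum 'I_m])).

Lemma sys_cases (P : frow m Z -> Prop) :
  (forall j, P (lrow j)) -> (forall i, P (krow i)) -> (forall i, P (jrow i)) ->
  (forall i, P (njrow i)) -> forall r, r \in sys -> P r.
Proof.
move=> h1 h2 h3 h4 r; rewrite !mem_cat => /orP [|/orP [|/orP []]] /mapP [i _ ->]; by [].
Qed.

Lemma in_sys_l j : lrow j \in sys. Proof. by rewrite mem_cat map_f ?mem_enum. Qed.
Lemma in_sys_k i : krow i \in sys. Proof. by rewrite !mem_cat map_f ?mem_enum ?orbT. Qed.
Lemma in_sys_j i : jrow i \in sys. Proof. by rewrite !mem_cat map_f ?mem_enum ?orbT. Qed.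
Lemma in_sys_nj i : njrow i \in sys. Proof. by rewrite !mem_cat map_f ?mem_enum ?orbT. Qed.

End Sys.

Lemma ratsol (J : {set 'I_m}) (a0 : 'I_m -> option Z) :
  (forall B, exists p, A p /\ (forall j, j \in J -> p j = a0 j) /\
       (forall i, i \in I -> i \notin J -> exists z, p i = Some z /\ le B z)) ->
  exists v : 'I_m -> rat,
    [/\ forall i, i \in J -> v i = 0,
        forall i, i \in I -> i \notin J -> 1 <= v i &
        forall j, 0 <= \sum_(i in I) (c j i)%:~R * v i].
Proof.
move=> hpts.
pose cc i := odflt 0 (a0 i).
have [[v hv]|[r [hr1 [hr2 hr3]]]] := fm (sys J cc); last first.
  exfalso.
  pose B := if le 0 (one - mc r) then one - mc r else 0.
  have hB0 : le 0 B.
    rewrite /B; case: ifP => // h; exact: oz_refl.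
  have hB1 : le (one - mc r) B.
    rewrite /B; case: ifP => h; first exact: oz_refl.
    case: (oz_total hle 0 (one - mc r)) => // h'; by rewrite h' in h.
  have [p [pA [pJ pK]]] := hpts B.
  pose pz i := odflt 0 (p i).
  have hall : forall r', r' \in sys J cc -> msat le B pz r'.
    apply: sys_cases.
    - move=> j; rewrite /msat /= mulr0z addr0.
      have [_ hg _] := (hA p).1 pA.
      apply: oz_trans (hg j) _ => //.
      rewrite /linf big_mkcond /=.
      have -> : \sum_(i < m) pz i *~ co (lrow j) i =
          \sum_(i < m) (if i \in I then odflt 0 (p i) *~ c j i else 0).
        by apply: eq_bigr => i _; rewrite /co /lrow /= ffunE /pz; case: (i \in I) => //; rewrite mulr0z.
      exact: oz_refl.
    - move=> i; rewrite /krow; case: ifP => [/andP [hi1 hi2]|_]; last first.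
        rewrite /msat /zrow /co /rh /mc /= mulr0z addr0 big1; first exact: oz_refl.
        by move=> i' _; rewrite ffunE mulr0z.
      rewrite /msat /co /rh /mc /= add0r mulr1z.
      rewrite (eq_bigr (fun i' => pz i' *~ (if i' == i then 1 else 0))); last by move=> i' _; rewrite ffunE.
      rewrite sumZ_delta; have [z [hz1 hz2]] := pK i hi1 hi2; by rewrite /pz hz1.
    - move=> i; rewrite /jrow; case: ifP => [hi|_]; last first.
        rewrite /msat /zrow /co /rh /mc /= mulr0z addr0 big1; first exact: oz_refl.
        by move=> i' _; rewrite ffunE mulr0z.
      rewrite /msat /co /rh /mc /= mulr0z addr0.
      rewrite (eq_bigr (fun i' => pz i' *~ (if i' == i then 1 else 0))); last by move=> i' _; rewrite ffunE.
      by rewrite sumZ_delta /pz /cc pJ //; exact: oz_refl.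
    - move=> i; rewrite /njrow; case: ifP => [hi|_]; last first.
        rewrite /msat /zrow /co /rh /mc /= mulr0z addr0 big1; first exact: oz_refl.
        by move=> i' _; rewrite ffunE mulr0z.
      rewrite /msat /co /rh /mc /= mulr0z addr0.
      rewrite (eq_bigr (fun i' => - (pz i' *~ (if i' == i then 1 else 0)))); last by move=> i' _; rewrite ffunE mulrNz.
      by rewrite sumrN sumZ_delta /pz /cc pJ //; exact: oz_refl.
  have := msat_der hle hall hr1.
  rewrite /msat big1; last by move=> i _; rewrite hr2 mulr0z.
  move=> h0.
  have h1 : le one (mc r + B *~ rh r).
    apply: (@oz_trans _ _ hle _ (mc r + B)).
      have := oz_addl hle (mc r) hB1; by rewrite addrC subrK.
    apply: oz_addl => //; exact: oz_le_mulz.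
  have [h2 h3] := hone; apply: h3; apply: (oz_anti hle h2); exact: oz_trans h1 h0.
exists v; split.
- move=> i hi; apply/eqP; rewrite eq_le; apply/andP; split.
  + have := hv _ (in_sys_nj J cc i); rewrite /satr /njrow hi /rh /Sv /co /=.
    rewrite (eq_bigr (fun i' => - ((if i' == i then 1 else 0 : int)%:~R * v i'))); last first.
      by move=> i' _; rewrite ffunE mulrNz mulNr.
    by rewrite sumrN sumQ_delta mulr0z oppr_ge0.
  + have := hv _ (in_sys_j J cc i); rewrite /satr /jrow hi /rh /Sv /co /=.
    rewrite (eq_bigr (fun i' => ((if i' == i then 1 else 0 : int)%:~R * v i'))); last first.
      by move=> i' _; rewrite ffunE.
    by rewrite sumQ_delta mulr0z.
- move=> i hi1 hi2; have := hv _ (in_sys_k J cc i); rewrite /satr /krow hi1 hi2 /rh /Sv /co /=.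
  rewrite (eq_bigr (fun i' => ((if i' == i then 1 else 0 : int)%:~R * v i'))); last first.
    by move=> i' _; rewrite ffunE.
  by rewrite sumQ_delta.
- move=> j; have := hv _ (in_sys_l J cc j); rewrite /satr /lrow /rh /Sv /co /= mulr0z.
  rewrite [X in _ <= X -> _](eq_bigr (fun i => if i \in I then (c j i)%:~R * v i else 0)).
    by rewrite -big_mkcond.
  by move=> i _; rewrite ffunE; case: (i \in I) => //; rewrite mulr0z mul0r.
Qed.


Lemma intsol (J : {set 'I_m}) (a0 : 'I_m -> option Z) :
  (forall B, exists p, A p /\ (forall j, j \in J -> p j = a0 j) /\
       (forall i, i \in I -> i \notin J -> exists z, p i = Some z /\ le B z)) ->
  exists w : 'I_m -> int,
    [/\ forall i, i \in J -> w i = 0,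
        forall i, i \in I -> i \notin J -> 1 <= w i &
        forall j, 0 <= \sum_(i in I) w i * c j i].
Proof.
move=> /ratsol [v [hv1 hv2 hv3]].
pose D := \prod_i denq (v i).
pose w i := numq (v i) * \prod_(j | j != i) denq (v j).
have key : forall i, (w i)%:~R = v i * D%:~R :> rat.
  by move=> i; rewrite /w /D [in RHS](bigD1 i) //= !intrM numqE mulrA.
have hD : 0 < D by apply: prodr_gt0 => ? _; exact: denq_gt0.
have hDq : 1 <= D%:~R :> rat by rewrite ler1z.
exists (fun i => w i); split.
- move=> i hi; have := key i; rewrite hv1 // mul0r => /eqP; rewrite intr_eq0 => /eqP //.
- move=> i hi1 hi2; suff : (1 : int)%:~R <= (w i)%:~R :> rat by rewrite ler_int.
  rewrite key; have := hv2 i hi1 hi2; move: (v i) => x hx; nra.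
- move=> j; suff : (0 : rat) <= (\sum_(i in I) w i * c j i)%:~R by rewrite ler0z.
  rewrite rmorph_sum /=.
  rewrite (eq_bigr (fun i => D%:~R * ((c j i)%:~R * v i))); last first.
    by move=> i _; rewrite intrM key; ring.
  rewrite -mulr_sumr; apply: mulr_ge0 => //; lra.
Qed.


Lemma recess (J : {set 'I_m}) (a0 : 'I_m -> option Z) :
  J \subset I ->
  (forall B, exists p, A p /\ (forall j, j \in J -> p j = a0 j) /\
       (forall i, i \in I -> i \notin J -> exists z, p i = Some z /\ le B z)) ->
  forall a B, A a -> exists a', A a' /\ (forall j, j \in J -> a' j = a j) /\
       (forall i, i \in I -> i \notin J -> exists z, a' i = Some z /\ le B z).
Proof.
move=> hJI /intsol [w [hw1 hw2 hw3]] a B aA.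
have [asupp ag acong] := (hA a).1 aA.
pose N := (\prod_(j < l) nn j)%N.
have hN : (0 < N)%N.
  apply: prodn_gt0 => j; exact: leq_ltn_trans (leq0n _) (hrho j).
have [T [hT0 hT]] := oz_ub hle (fun i => B - odflt 0 (a i)) (enum 'I_m).
pose a' i := if i \in I then Some (odflt 0 (a i) + T *~ (w i *+ N)) else None.
have hlin : forall cc, linf I cc a' = linf I cc a + T *~ ((\sum_(i in I) w i * cc i) *+ N).
  move=> cc; rewrite /linf mulrz_Mn mulrz_sumr -sumrMnl -big_split /=.
  apply: eq_bigr => i hi; rewrite /a' hi /= mulrzDl; congr (_ + _).
  by rewrite -mulrzA mulrnAl mulrz_Mn.
exists a'; split; last split.
- apply/(hA a'); split.
  + by apply/setP => i; rewrite /supp inE /a'; case: (i \in I).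
  + move=> j; rewrite hlin; apply: oz_trans (ag j) _ => //.
    rewrite -{1}[linf I (c j) a]addr0; apply: oz_addl => //.
    by apply: oz_ge0_mulz => //; apply: mulrn_wge0.
  + move=> j; have [y hy] := acong j; rewrite hlin.
    have -> : N = ((\prod_(i < l | i != j) nn i) * nn j)%N by rewrite /N (bigD1 j) //= mulnC.
    exists (y + T *~ ((\sum_(i in I) w i * d j i) *+ \prod_(i < l | i != j) nn i)).
    by rewrite mulrnA mulrz_Mn mulrnDl -hy addrAC.
- move=> j hj; have hjI : j \in I by apply: (subsetP hJI).
  rewrite /a' hjI hw1 // mul0rn mulr0z addr0.
  have : j \in supp a by rewrite asupp.
  by rewrite /supp inE; case: (a j).
- move=> i hi1 hi2; rewrite /a' hi1; eexists; split; first by [].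
  have h1 : le B (odflt 0 (a i) + T).
    have := oz_addl hle (odflt 0 (a i)) (hT i (mem_enum _ i)); by rewrite addrC subrK.
  apply: oz_trans h1 _ => //; apply: oz_addl => //; apply: oz_le_mulz => //.
  by rewrite pmulrn_lgt0 // (lt_le_trans _ (hw2 i hi1 hi2)).
Qed.

End Conc.


Section Top.
Variables (Z Q : zmodType) (le : rel Z) (one : Z) (qle : rel Q) (e : Z -> Q).
Hypotheses (hZ : is_zgroup le one) (hQ : is_divisible_hull le qle e).

Lemma hle : is_ordered_zmod le. Proof. by case: hZ. Qed.
Lemma hone : ltR le 0 one. Proof. by case: hZ. Qed.
Lemma hdisc x : ltR le 0 x -> le one x. Proof. by case: hZ => _ _ h _; apply: h. Qed.
Lemma hqle : is_ordered_zmod qle. Proof. by case: hQ. Qed.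
Lemma eB x y : e (x - y) = e x - e y. Proof. by case: hQ => _ h _ _ _; apply: h. Qed.
Lemma ele x y : le x y <-> qle (e x) (e y). Proof. by case: hQ => _ _ h _ _; apply: h. Qed.
Lemma ediv (q : Q) (n : nat) : (0 < n)%N -> exists r, r *+ n = q.
Proof. by case: hQ => _ _ _ h _; apply: h. Qed.
Lemma ehull (q : Q) : exists n : nat, (0 < n)%N /\ exists z, q *+ n = e z.
Proof. by case: hQ => _ _ _ _ h; apply: h. Qed.

Lemma e0 : e 0 = 0. Proof. by have := eB 0 0; rewrite !subrr. Qed.
Lemma eN x : e (- x) = - e x. Proof. by have := eB 0 x; rewrite e0 !sub0r. Qed.
Lemma eD x y : e (x + y) = e x + e y.
Proof. by have := eB x (- y); rewrite opprK eN opprK. Qed.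
Lemma einj x y : e x = e y -> x = y.
Proof.
move=> h; apply: (oz_anti hle); apply/ele; rewrite h; exact: (oz_refl hqle).
Qed.
Lemma elt x y : ltR le x y <-> ltR qle (e x) (e y).
Proof.
split=> [[h1 h2]|[h1 h2]]; split.
- exact/ele.
- by move=> /einj.
- exact/ele.
- by move=> exy; apply: h2; rewrite exy.
Qed.
Lemma omap_einj (u v : option Z) : omap e u = omap e v -> u = v.
Proof. by case: u; case: v => //= a b [/einj ->]. Qed.

Lemma zstep x y : ltR le x y -> le (x + one) y.
Proof.
move=> [h1 h2]; have h3 : ltR le 0 (y - x).
  split; first exact: (proj1 (oz_sub0 hle x y) h1).
  by move=> /eqP; rewrite eq_sym subr_eq0 => /eqP /esym.
have := oz_addr hle x (hdisc h3); by rewrite subrK addrC.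
Qed.

Lemma eone_pos : ltR qle 0 (e one). Proof. by rewrite -e0; apply/elt; exact: hone. Qed.

Lemma qhalf : exists r, ltR qle 0 r /\ r + r = e one.
Proof.
have [r hr] := ediv (e one) (isT : (0 < 2)%N).
exists r; split; last by rewrite -hr mulr2n.
case: (oz_total hqle r 0) => h; last first.
  split => // r0; move: eone_pos; rewrite -hr -r0 mul0rn; exact: oz_lt_irr.
exfalso; have := oz_add hqle h h; rewrite addr0 -mulr2n hr => h'.
by apply: (oz_ltNge hqle eone_pos).
Qed.

Lemma disc2 r q z z' : r + r = e one ->
  ltR qle (q - r) (e z) -> ltR qle (e z) (q + r) ->
  ltR qle (q - r) (e z') -> ltR qle (e z') (q + r) -> z = z'.
Proof.
move=> hr.
wlog hzz : z z' / le z z'.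
  move=> hw h1 h2 h3 h4; case: (oz_total hle z z') => h; first exact: hw.
  by apply/esym; apply: hw.
move=> h1 h2 h3 h4; apply/eqP; case: eqP => // hne; exfalso.
have h5 := zstep (conj hzz hne).
move/ele: h5; rewrite eD => h5.
have h6 := oz_lt_addr hqle r h1; rewrite subrK in h6.
have h7 := oz_lt_addr hqle (- r) h4; rewrite addrK in h7.
have h8 := oz_lt_addr hqle r (oz_lt_trans hqle h7 h6); rewrite subrK -addrA hr in h8.
exact: (oz_lt_irr (oz_lt_le_trans hqle h8 h5)).
Qed.


Lemma ltq_sub r q : ltR qle 0 r -> ltR qle (q - r) q.
Proof. by move=> h; have := oz_lt_addl hqle q (oz_lt_opp hqle h); rewrite oppr0 addr0. Qed.
Lemma ltq_add r q : ltR qle 0 r -> ltR qle q (q + r).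
Proof. by move=> h; have := oz_lt_addl hqle q h; rewrite addr0. Qed.

Lemma ub1 q : exists B, ltR qle q (e B).
Proof.
have [n [hn [z hz]]] := ehull q.
have [z' [hz1 hz2]] : exists z', le 0 z' /\ le z z'.
  case: (oz_total hle 0 z) => h; first by exists z; split => //; exact: (oz_refl hle).
  by exists 0; split => //; exact: (oz_refl hle).
exists (z' + one).
have h1 : ltR qle (e z') (e (z' + one)) by rewrite eD; apply: ltq_add; exact: eone_pos.
case: (oz_total hqle q 0) => hq.
- have h2 : qle q (e z').
    apply: (oz_trans hqle hq); rewrite -e0; exact/ele.
  exact: (oz_le_lt_trans hqle h2 h1).
- have h2 : qle q (e z').
    apply: (oz_trans hqle (oz_le_muln hqle hq hn)); rewrite hz; exact/ele.
  exact: (oz_le_lt_trans hqle h2 h1).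
Qed.

Lemma ubound (m : nat) (f : 'I_m -> Q) : exists B, forall i, ltR qle (f i) (e B).
Proof.
suff : exists B, forall i, i \in enum 'I_m -> ltR qle (f i) (e B).
  by move=> [B hB]; exists B => i; apply: hB; rewrite mem_enum.
elim: (enum 'I_m) => [|i s [B hB]]; first by exists 0.
have [B1 hB1] := ub1 (f i).
case: (oz_total hle B B1) => h.
- exists B1 => j; rewrite inE => /orP [/eqP -> //|/hB hj].
  apply: (oz_lt_le_trans hqle hj); exact/ele.
- exists B => j; rewrite inE => /orP [/eqP ->|/hB hj //].
  apply: (oz_lt_le_trans hqle hB1); exact/ele.
Qed.

Section Cl.
Variable m : nat.
Implicit Types (x : 'I_m -> option Q).

Definition cnbA (rad : Q) x i := match x i with Some q => q - rad | None => 0 end.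
Definition cnbB (rad : Q) x i := match x i with Some q => Some (q + rad) | None => None end.

Lemma cnb_ok rad x : ltR qle 0 rad -> forall i, ival qle (cnbA rad x i) (cnbB rad x i) (x i).
Proof.
move=> h i; rewrite /cnbA /cnbB; case: (x i) => [q|] //=.
exists q; split => //; split; [exact: ltq_sub | exact: ltq_add].
Qed.

Lemma cl_face S J x : closure qle (face qle J S) x -> closure qle S x.
Proof.
move=> h a b hx; have [y [[hy _] hyn]] := h a b hx; exact: hy.
Qed.

Lemma cl_none S x i : closure qle S x -> (forall y, S y -> y i = None) -> x i = None.
Proof.
move=> hcl hS; case hx: (x i) => [q|] //; exfalso.
have [y [Sy hy]] := hcl _ _ (cnb_ok x eone_pos).
by have := hy i; rewrite /cnbB hx /= hS // => [[q' []]].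
Qed.

Lemma supp_none J x i : supp x = J -> i \notin J -> x i = None.
Proof. by move=> <-; rewrite /supp inE negbK => /eqP. Qed.
Lemma supp_some J x i : supp x = J -> i \in J -> exists q, x i = Some q.
Proof. by move=> <-; rewrite /supp inE; case: (x i) => // q _; exists q. Qed.

Lemma cl_disc (S : ('I_m -> option Z) -> Prop) x i q :
  closure qle (embset e S) x -> x i = Some q -> exists z, q = e z.
Proof.
move=> hcl hx; have [r [hr0 hr]] := qhalf.
have [y [[p Sp hyp] hy]] := hcl _ _ (cnb_ok x hr0).
have := hy i; rewrite hyp /embpt /cnbA /cnbB hx /=.
case hpi: (p i) => [z|] /= [q' [//= [<-] [h1 h2]]].
case: (q =P e z) => [->|hne]; first by exists z.
exfalso.
case: (oz_total hqle (e z) q) => hzq.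
- have hlt : ltR qle (e z) q by split => // h; apply: hne.
  pose A2 i' := if i' == i then e z else cnbA r x i'.
  have hv : forall i', ival qle (A2 i') (cnbB r x i') (x i').
    move=> i'; rewrite /A2; case: eqP => [->|_]; last exact: cnb_ok.
    rewrite /cnbB hx /=; exists q; split => //; split => //; exact: ltq_add.
  have [y2 [[p2 _ hyp2] hy2]] := hcl _ _ hv.
  have := hy2 i; rewrite hyp2 /embpt /A2 eqxx /cnbB hx /=.
  case: (p2 i) => [z2|] /= [q2 [//= [<-] [h3 h4]]].
  have ez := disc2 hr h1 h2 (oz_lt_trans hqle h1 h3) h4.
  by rewrite -ez in h3; apply: (oz_lt_irr h3).
- have hlt : ltR qle q (e z) by split => // h; apply: hne.
  pose B2 i' := if i' == i then Some (e z) else cnbB r x i'.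
  have hv : forall i', ival qle (cnbA r x i') (B2 i') (x i').
    move=> i'; rewrite /B2; case: eqP => [->|_]; last exact: cnb_ok.
    rewrite /cnbA hx /=; exists q; split => //; split => //; exact: ltq_sub.
  have [y2 [[p2 _ hyp2] hy2]] := hcl _ _ hv.
  have := hy2 i; rewrite hyp2 /embpt /B2 eqxx /cnbA hx /=.
  case: (p2 i) => [z2|] /= [q2 [//= [<-] [h3 h4]]].
  have ez := disc2 hr h1 h2 h3 (oz_lt_trans hqle h4 h2).
  by rewrite -ez in h4; apply: (oz_lt_irr h4).
Qed.

End Cl.
End Top.


Section Near.
Variables (Z Q : zmodType) (le : rel Z) (one : Z) (qle : rel Q) (e : Z -> Q).
Hypotheses (hZ : is_zgroup le one) (hQ : is_divisible_hull le qle e).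
Variable m : nat.
Implicit Types (x : 'I_m -> option Q).

Lemma near (S : ('I_m -> option Z) -> Prop) (J : {set 'I_m}) x (alpha : 'I_m -> Q) :
  face qle J (embset e S) x ->
  exists p, S p /\ (forall j, j \in J -> omap e (p j) = x j) /\
    (forall i, i \notin J -> p i = None \/ exists z, p i = Some z /\ ltR qle (alpha i) (e z)).
Proof.
move=> [hcl hsupp]; have [r [hr0 hr]] := qhalf hZ hQ.
pose A' i := if i \in J then cnbA r x i else alpha i.
pose B' i := if i \in J then cnbB r x i else None.
have hv : forall i, ival qle (A' i) (B' i) (x i).
  move=> i; rewrite /A' /B'; case: ifP => hi; first exact: (cnb_ok hQ).
  by rewrite (supp_none hsupp) ?hi.
have [y [[p Sp hyp] hy]] := hcl _ _ hv.
exists p; split => //; split.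
- move=> j hj; have [q hq] := supp_some hsupp hj.
  have [z hz] := cl_disc hZ hQ hcl hq.
  have := hy j; rewrite hyp /embpt /A' /B' hj /cnbA /cnbB hq hz /=.
  case: (p j) => [z'|] /= [q' [//= [<-] [h1 h2]]].
  have h3 := ltq_sub hQ (e z) hr0; have h4 := ltq_add hQ (e z) hr0.
  by rewrite (disc2 hZ hQ hr h1 h2 h3 h4).
- move=> i hi; have := hy i; rewrite hyp /embpt /A' /B' (negbTE hi).
  case: (p i) => [z|] /=; last by left.
  by move=> h; right; exists z.
Qed.

Lemma face_pt (S : ('I_m -> option Z) -> Prop) (J : {set 'I_m}) x :
  face qle J (embset e S) x -> exists2 p, S p & forall i, x i = embpt e (projJ J p) i.
Proof.
move=> hf; have [p [Sp [h1 h2]]] := near (fun _ => 0) hf.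
exists p => // i; rewrite /embpt /projJ; case: ifP => hi; first by rewrite h1.
by case: hf => _ hs; rewrite (supp_none hs) ?hi.
Qed.

Lemma cl_from (T : ('I_m -> option Q) -> Prop) (J : {set 'I_m}) (p : 'I_m -> option Z) :
  (forall B : Z, exists p', T (embpt e p') /\ (forall j, j \in J -> p' j = p j) /\
     (forall i, i \notin J -> p' i = None \/ exists z, p' i = Some z /\ le B z)) ->
  closure qle T (embpt e (projJ J p)).
Proof.
move=> h a b hx; have [B hB] := ubound hZ hQ a.
have [p' [Sp' [h1 h2]]] := h B.
exists (embpt e p'); split; first by [].
move=> i; case: (boolP (i \in J)) => hi.
  by have := hx i; rewrite /embpt /projJ hi h1.
have := hx i; rewrite /embpt /projJ (negbTE hi) /=.
case: (b i) => [bb|] /=; first by move=> [q [//]].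
move=> _; case: (h2 i hi) => [->|[z [-> hz]]] //=.
apply: (oz_lt_le_trans (hqle hQ) (hB i)); exact/(ele hQ).
Qed.

Lemma closure_ext (T : ('I_m -> option Q) -> Prop) x y :
  (forall i, x i = y i) -> closure qle T y -> closure qle T x.
Proof. by move=> h hy a b hx; apply: hy => i; rewrite -h. Qed.

Lemma supp_ext (x y : 'I_m -> option Q) : (forall i, x i = y i) -> supp x = supp y.
Proof. by move=> h; apply/setP => i; rewrite !inE h. Qed.

End Near.


Section Main.
Variables (Z Q : zmodType) (le : rel Z) (one : Z) (qle : rel Q) (e : Z -> Q).
Hypotheses (hZ : is_zgroup le one) (hQ : is_divisible_hull le qle e).
Variables (m : nat) (I : {set 'I_m}) (A : ('I_m -> option Z) -> Prop).
Variables (k l : nat) (c : 'I_k -> 'I_m -> int) (g : 'I_k -> Z)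
  (d : 'I_l -> 'I_m -> int) (rho nn : 'I_l -> nat).
Hypothesis hrho : forall j, (rho j < nn j)%N.
Hypothesis hA : forall x, A x <->
      [/\ supp x = I,
          (forall j, le (g j) (linf I (c j) x)) &
          (forall j, congr (nn j) (linf I (d j) x) (one *+ rho j))].

Notation FA J := (face qle J (embset e A)).

Lemma suppA a : A a -> supp a = I. Proof. by move=> /hA []. Qed.
Lemma A_some a i : A a -> i \in I -> exists z, a i = Some z.
Proof.
move=> /suppA hs; rewrite -hs /supp inE; case: (a i) => // z _; by exists z.
Qed.
Lemma A_none a i : A a -> i \notin I -> a i = None.
Proof. by move=> /suppA hs; rewrite -hs /supp inE negbK => /eqP. Qed.

Lemma faceI (J : {set 'I_m}) : (exists x, FA J x) -> J \subset I.
Proof.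
move=> [x hx]; have [p pA hp] := face_pt hZ hQ hx.
apply/subsetP => j hj; case: hx => _ hs.
have [q hq] := supp_some hs hj.
move: (hp j); rewrite hq /embpt /projJ hj.
case: (boolP (j \in I)) => // hjI; by rewrite (A_none pA hjI).
Qed.

Lemma hpts (J : {set 'I_m}) : (exists x, FA J x) -> exists a0, A a0 /\ forall B, exists p, A p /\
   (forall j, j \in J -> p j = a0 j) /\
   (forall i, i \in I -> i \notin J -> exists z, p i = Some z /\ le B z).
Proof.
move=> [x hx]; have [a0 a0A hx0] := face_pt hZ hQ hx.
exists a0; split => // B.
have [p [pA [h1 h2]]] := near hZ hQ (fun _ => e B) hx.
exists p; split => //; split.
- move=> j hj; apply: (omap_einj hZ hQ); rewrite h1 // hx0 /embpt /projJ hj //.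
- move=> i hi1 hi2; case: (h2 i hi2) => [hn|[z [hz1 hz2]]].
    by have [z hz] := A_some pA hi1; rewrite hz in hn.
  exists z; split => //; move/(elt hZ hQ): hz2 => [] //.
Qed.

Lemma Rlem (J : {set 'I_m}) : (exists x, FA J x) -> forall a B, A a -> exists a', A a' /\
   (forall j, j \in J -> a' j = a j) /\
   (forall i, i \notin J -> a' i = None \/ exists z, a' i = Some z /\ le B z).
Proof.
move=> hJ a B aA; have hJI := faceI hJ; have [a0 [_ hp]] := hpts hJ.
have [a' [a'A [h1 h2]]] := recess (hle hZ) (hone hZ) hrho hA hJI hp B aA.
exists a'; split => //; split => // i hi.
case: (boolP (i \in I)) => hiI; first by right; apply: h2.
by left; apply: A_none.
Qed.

Lemma face_of (K : {set 'I_m}) (a : 'I_m -> option Z) : K \subset I -> A a ->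
  (forall B, exists a', A a' /\ (forall j, j \in K -> a' j = a j) /\
     (forall i, i \notin K -> a' i = None \/ exists z, a' i = Some z /\ le B z)) ->
  FA K (embpt e (projJ K a)).
Proof.
move=> hKI aA h; split.
- apply: (cl_from hZ hQ) => B; have [a' [a'A [h1 h2]]] := h B.
  by exists a'; split => //; exists a'.
- apply/setP => i; rewrite /supp inE /embpt /projJ; case: ifP => hi //=.
  by have [z ->] := A_some aA (subsetP hKI i hi).
Qed.

Lemma F1 (J : {set 'I_m}) : (exists x, FA J x) -> forall x,
  FA J x <-> exists2 a, A a & forall i, x i = embpt e (projJ J a) i.
Proof.
move=> hJ x; split; first by move=> hx; exact: (face_pt hZ hQ hx).
move=> [a aA hx]; have [hc hs] := face_of (faceI hJ) aA (fun B => Rlem hJ B aA).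
split; first exact: closure_ext hx hc.
by rewrite (supp_ext hx).
Qed.

Lemma F3 (J H : {set 'I_m}) : (exists x, FA J x) -> (exists x, FA H x) ->
  spec qle (FA H) (FA J) <-> H \subset J.
Proof.
move=> hJ hH; split.
- move=> hsp; have [x hx] := hH; have hcl := hsp x hx.
  apply/subsetP => h hh; apply/negPn/negP => hnJ.
  have := cl_none hZ hQ hcl (fun y hy => supp_none (proj2 hy) hnJ).
  by case: hx => _ hs; have [q ->] := supp_some hs hh.
- move=> hHJ x /(F1 hH) [a aA hx]; apply: closure_ext hx _.
  apply: (cl_from hZ hQ) => B; have [a1 [a1A [h1 h2]]] := Rlem hH B aA.
  exists (projJ J a1); split; last split.
  + apply/(F1 hJ); exists a1 => // i; rewrite /embpt /projJ; by case: ifP.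
  + by move=> j hj; rewrite /projJ (subsetP hHJ j hj) h1.
  + move=> i hi; rewrite /projJ; case: ifP => _; last by left.
    exact: h2.
Qed.

Lemma F2 (J H : {set 'I_m}) : (exists x, FA J x) -> (exists x, FA H x) -> H \subset J ->
  forall x, FA H x <-> face qle H (FA J) x.
Proof.
move=> hJ hH hHJ x; split.
- move=> hx; split; last by case: hx.
  by apply: (proj2 (F3 hJ hH) hHJ).
- move=> [hcl hs]; split => //; exact: cl_face hcl.
Qed.

Lemma F4 (J H : {set 'I_m}) : (exists x, FA J x) -> (exists x, FA H x) ->
  exists x, FA (H :&: J) x.
Proof.
move=> hJ hH; have [x hx] := hJ; have [a aA _] := face_pt hZ hQ hx.
exists (embpt e (projJ (H :&: J) a)); apply: face_of => //.
  apply/subsetP => i; rewrite inE => /andP [_ hi]; exact: (subsetP (faceI hJ)).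
move=> B; have [a1 [a1A [h1 h2]]] := Rlem hJ B aA.
have [a2 [a2A [h3 h4]]] := Rlem hH B a1A.
exists a2; split => //; split.
- move=> j; rewrite inE => /andP [hjH hjJ]; by rewrite h3 // h1.
- move=> i; rewrite inE negb_and => /orP [hiH|hiJ]; first exact: h4.
  case: (boolP (i \in H)) => hiH; last exact: h4.
  by rewrite h3 //; apply: h2.
Qed.

End Main.

Unset Implicit Arguments.

Theorem proposition3p3
  (Z Q : zmodType) (le : rel Z) (one : Z) (qle : rel Q) (e : Z -> Q)
  (hZ : is_zgroup le one) (hQ : is_divisible_hull le qle e)
  (m : nat) (I : {set 'I_m}) (A : ('I_m -> option Z) -> Prop)
  (hA : basic_presburger le one I A)
  (J H : {set 'I_m})
  (hJ : exists x, face qle J (embset e A) x)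
  (hH : exists x, face qle H (embset e A) x) :
  [/\ (* (1) F_J(A) = pi_J(A) *)
      (forall x, face qle J (embset e A) x <->
                 exists2 a, A a & forall i, x i = embpt e (projJ J a) i),
      (* (2) *)
      (H \subset J ->
        forall x, face qle H (embset e A) x <->
                  face qle H (face qle J (embset e A)) x),
      (* (3) *)
      (spec qle (face qle H (embset e A)) (face qle J (embset e A))
         <-> H \subset J),
      (* (3), "in particular" *)
      ((forall J1 J2 : {set 'I_m},
          (exists x, face qle J1 (embset e A) x) ->
          (exists x, face qle J2 (embset e A) x) ->
          spec qle (face qle J1 (embset e A)) (face qle J2 (embset e A)) \/
          spec qle (face qle J2 (embset e A)) (face qle J1 (embset e A)))
       <->
       (forall J1 J2 : {set 'I_m},
          (exists x, face qle J1 (embset e A) x) ->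
          (exists x, face qle J2 (embset e A) x) ->
          J1 \subset J2 \/ J2 \subset J1)) &
      (* (4) *)
      exists x, face qle (H :&: J) (embset e A) x].
Proof.
have [kk [ll [c [g [d [rho [nn [hrho hAdef]]]]]]]] := hA.
split.
- exact: (F1 hZ hQ hrho hAdef hJ).
- move=> hHJ; exact: (F2 hZ hQ hrho hAdef hJ hH hHJ).
- exact: (F3 hZ hQ hrho hAdef hJ hH).
- split=> hyp J1 J2 h1 h2.
  + case: (hyp J1 J2 h1 h2) => h.
      by left; exact: (proj1 (F3 hZ hQ hrho hAdef h2 h1) h).
    by right; exact: (proj1 (F3 hZ hQ hrho hAdef h1 h2) h).
  + case: (hyp J1 J2 h1 h2) => h.
      by left; exact: (proj2 (F3 hZ hQ hrho hAdef h2 h1) h).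
    by right; exact: (proj2 (F3 hZ hQ hrho hAdef h1 h2) h).
- exact: (F4 hZ hQ hrho hAdef hJ hH).
Qed.
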